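(* Let $V$ be a countably infinite set and $(V,E)$ a directed acyclic graph. Let $D\subseteq L^1(V)$ be the set of functions of the form $\operatorname{div}Q$ with $Q$ a finitely decomposable flow on $(V,E)$. Then $D$ is closed in the norm topology of $L^1(V)$.
   Context: A flow on $(V,E)$ is a map $Q:E\to[0,+\infty)$, with $\operatorname{div}Q(x)=\sum_{y:(x,y)\in E}Q(x,y)-\sum_{y:(y,x)\in E}Q(y,x)$. For a directed path $\gamma=(x_0,\dots,x_n)$, $Q_\gamma(x,y)=1$ if $(x,y)=(x_i,x_{i+1})$ for some $i$, $0$ otherwise. $Q$ is finitely decomposable if $Q=\sum_nq_nQ_{\gamma_n}$ pointwise for a countable family of finite self-avoiding directed paths $\gamma_n$ in $(V,E)$ and weights $q_n\ge0$ with $\sum_nq_n<\infty$; its divergence is then well defined and summable. *)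

(* Defs.v *)
From Stdlib Require Import Reals List ClassicalEpsilon.
From Coquelicot Require Import Coquelicot.
Import ListNotations.
Open Scope R_scope.
Set Implicit Arguments.

Section Defs.
Variable V : Type.

(* e : nat -> V is a bijection (V countably infinite). *)
Definition enumeration (e : nat -> V) : Prop :=
  (forall n m, e n = e m -> n = m) /\ (forall v, exists n, e n = v).

Definition ind (P : Prop) : R :=
  if excluded_middle_informative P then 1 else 0.

(* Sums over V are taken along the enumeration e; for absolutely summable
   functions (the only ones used) the value does not depend on e. *)
Definition L1 (e : nat -> V) (g : V -> R) : Prop :=
  ex_series (fun n => Rabs (g (e n))).

Definition L1norm (e : nat -> V) (g : V -> R) : R :=
  Series (fun n => Rabs (g (e n))).

Fixpoint dpath (E : V -> V -> Prop) (l : list V) : Prop :=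
  match l with
  | a :: ((b :: _) as t) => E a b /\ dpath E t
  | _ => True
  end.

Definition acyclic (E : V -> V -> Prop) : Prop :=
  forall (x : V) (l : list V), ~ dpath E (x :: l ++ [x]).

Definition sa_path (E : V -> V -> Prop) (l : list V) : Prop :=
  l <> [] /\ NoDup l /\ dpath E l.

Fixpoint edge_in (l : list V) (x y : V) : Prop :=
  match l with
  | a :: ((b :: _) as t) => (a = x /\ b = y) \/ edge_in t x y
  | _ => False
  end.

Definition Qpath (l : list V) (x y : V) : R := ind (edge_in l x y).

(* A flow: nonnegative function on edges (values off E are irrelevant). *)
Definition flow (E : V -> V -> Prop) (Q : V -> V -> R) : Prop :=
  forall x y, E x y -> 0 <= Q x y.

(* Q = sum_n q_n Q_{gamma_n} pointwise on E, with a countable family of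
   finite self-avoiding directed paths, q_n >= 0, sum_n q_n < oo.
   (A finite family is the special case where q_n = 0 eventually.) *)
Definition fin_decomposable (E : V -> V -> Prop) (Q : V -> V -> R) : Prop :=
  exists (gam : nat -> list V) (q : nat -> R),
    (forall n, sa_path E (gam n)) /\
    (forall n, 0 <= q n) /\ ex_series q /\
    (forall x y, E x y -> is_series (fun n => q n * Qpath (gam n) x y) (Q x y)).

Definition div (e : nat -> V) (E : V -> V -> Prop) (Q : V -> V -> R) (x : V) : R :=
  Series (fun n => ind (E x (e n)) * Q x (e n))
  - Series (fun n => ind (E (e n) x) * Q (e n) x).

Definition Dset (e : nat -> V) (E : V -> V -> Prop) (g : V -> R) : Prop :=
  exists Q, flow E Q /\ fin_decomposable E Q /\ forall x, g x = div e E Q x.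

End Defs.

(* Main.v *)
Require Import Defs.
From Stdlib Require Import Reals Lra Lia List ClassicalEpsilon Classical.
From Coquelicot Require Import Coquelicot.
Open Scope R_scope.

Fixpoint fsum (f : nat -> R) (n : nat) : R :=
  match n with O => 0 | S m => fsum f m + f m end.

Definition conv (u : nat -> R) (l : R) : Prop :=
  forall eps, 0 < eps -> exists N, forall n, (N <= n)%nat -> Rabs (u n - l) < eps.

Lemma fsum_sum_f f n : fsum f (S n) = sum_f_R0 f n.
Proof. induction n; simpl in *. lra. rewrite <- IHn. simpl. lra. Qed.

Lemma is_series_conv f l : is_series f l <-> conv (fsum f) l.
Proof.
  rewrite is_series_Reals. unfold infinite_sum, conv, Rdist. split.
  - intros H eps He. destruct (H eps He) as [N HN]. exists (S N). intros n Hn.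
    destruct n as [|n]. lia. rewrite fsum_sum_f. apply HN. lia.
  - intros H eps He. destruct (H eps He) as [N HN]. exists N. intros n Hn.
    rewrite <- fsum_sum_f. apply HN. lia.
Qed.

Lemma conv_unique u a b : conv u a -> conv u b -> a = b.
Proof.
  intros Ha Hb. destruct (Req_dec a b) as [|Hne]; auto.
  set (e := Rabs (a - b) / 2).
  assert (He : 0 < e). { unfold e. assert (0 < Rabs (a-b)) by (apply Rabs_pos_lt; lra). lra. }
  destruct (Ha e He) as [N1 H1]. destruct (Hb e He) as [N2 H2].
  specialize (H1 (N1+N2)%nat ltac:(lia)). specialize (H2 (N1+N2)%nat ltac:(lia)).
  assert (Rabs (a - b) <= Rabs (u (N1+N2)%nat - a) + Rabs (u (N1+N2)%nat - b)).
  { replace (a - b) with (-(u (N1+N2)%nat - a) + (u (N1+N2)%nat - b)) by ring.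
    eapply Rle_trans. apply Rabs_triang. rewrite Rabs_Ropp. lra. }
  unfold e in *. lra.
Qed.

Lemma conv_le u v a b : conv u a -> conv v b -> (exists N, forall n, (N <= n)%nat -> u n <= v n) -> a <= b.
Proof.
  intros Ha Hb [N0 H0]. apply Rnot_lt_le. intro Hlt.
  set (e := (a - b) / 2). assert (He : 0 < e) by (unfold e; lra).
  destruct (Ha e He) as [N1 H1]. destruct (Hb e He) as [N2 H2].
  set (n := (N0 + N1 + N2)%nat).
  specialize (H0 n ltac:(unfold n; lia)). specialize (H1 n ltac:(unfold n; lia)). specialize (H2 n ltac:(unfold n; lia)).
  apply Rabs_def2 in H1. apply Rabs_def2 in H2. unfold e in *. lra.
Qed.

Lemma conv_const c : conv (fun _ => c) c.
Proof. intros eps He. exists O. intros. rewrite Rminus_eq_0, Rabs_R0. lra. Qed.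

Lemma conv_plus u v a b : conv u a -> conv v b -> conv (fun n => u n + v n) (a + b).
Proof.
  intros Ha Hb eps He. destruct (Ha (eps/2) ltac:(lra)) as [N1 H1].
  destruct (Hb (eps/2) ltac:(lra)) as [N2 H2]. exists (N1+N2)%nat. intros n Hn.
  specialize (H1 n ltac:(lia)). specialize (H2 n ltac:(lia)).
  apply Rabs_def2 in H1. apply Rabs_def2 in H2. apply Rabs_def1; lra.
Qed.

Lemma conv_opp u a : conv u a -> conv (fun n => - u n) (- a).
Proof.
  intros Ha eps He. destruct (Ha eps He) as [N H]. exists N. intros n Hn.
  replace (- u n - - a) with (- (u n - a)) by ring. rewrite Rabs_Ropp. auto.
Qed.

Lemma conv_ext u v a : (forall n, u n = v n) -> conv u a -> conv v a.
Proof. intros E H eps He. destruct (H eps He) as [N HN]. exists N. intros. rewrite <- E. auto. Qed.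

Lemma conv_squeeze u a (b : nat -> R) : conv b 0 -> (forall n, Rabs (u n - a) <= b n) -> conv u a.
Proof.
  intros Hb Hu eps He. destruct (Hb eps He) as [N HN]. exists N. intros n Hn.
  specialize (HN n Hn). specialize (Hu n). rewrite Rminus_0_r in HN.
  apply Rabs_def2 in HN. lra.
Qed.

Lemma conv_scal c u a : conv u a -> conv (fun n => c * u n) (c * a).
Proof.
  intros H. apply conv_squeeze with (b := fun n => Rabs c * Rabs (u n - a)).
  - intros eps He. destruct (Req_dec c 0) as [->|Hc].
    + exists O. intros. rewrite Rabs_R0, Rmult_0_l, Rminus_0_r, Rabs_R0. lra.
    + assert (0 < Rabs c) by (apply Rabs_pos_lt; auto).
      destruct (H (eps / Rabs c)) as [N HN]. apply Rdiv_lt_0_compat; lra.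
      exists N. intros n Hn. specialize (HN n Hn). rewrite Rminus_0_r.
      rewrite Rabs_mult, Rabs_Rabsolu, Rabs_Rabsolu.
      apply Rmult_lt_compat_l with (r := Rabs c) in HN; auto.
      replace (Rabs c * (eps / Rabs c)) with eps in HN by (field; lra). lra.
  - intros n. rewrite <- Rabs_mult. right. f_equal. ring.
Qed.

Lemma conv_series f l : conv (fsum f) l -> is_series f l.
Proof. apply is_series_conv. Qed.

Lemma series_conv f : ex_series f -> conv (fsum f) (Series f).
Proof. intros H. apply is_series_conv. apply Series_correct. auto. Qed.

Lemma fsum_nonneg f n : (forall k, 0 <= f k) -> 0 <= fsum f n.
Proof. intros H. induction n; simpl. lra. specialize (H n). lra. Qed.

Lemma fsum_mono f n m : (forall k, 0 <= f k) -> (n <= m)%nat -> fsum f n <= fsum f m.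
Proof. intros H Hnm. induction Hnm. lra. simpl. specialize (H m). lra. Qed.

Lemma fsum_le f g n : (forall k, (k < n)%nat -> f k <= g k) -> fsum f n <= fsum g n.
Proof. intros H. induction n; simpl. lra. assert (f n <= g n) by (apply H; lia).
  assert (fsum f n <= fsum g n) by (apply IHn; intros; apply H; lia). lra. Qed.

Lemma fsum_ext f g n : (forall k, (k < n)%nat -> f k = g k) -> fsum f n = fsum g n.
Proof. intros H. induction n; simpl. lra. rewrite H by lia. rewrite IHn; auto. Qed.

Lemma fsum_plus f g n : fsum (fun k => f k + g k) n = fsum f n + fsum g n.
Proof. induction n; simpl; lra. Qed.
Lemma fsum_minus f g n : fsum (fun k => f k - g k) n = fsum f n - fsum g n.
Proof. induction n; simpl; lra. Qed.
Lemma fsum_scal c f n : fsum (fun k => c * f k) n = c * fsum f n.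
Proof. induction n; simpl. ring. rewrite IHn. ring. Qed.
Lemma fsum_zero n : fsum (fun _ => 0) n = 0.
Proof. induction n; simpl; lra. Qed.
Lemma fsum_abs f n : Rabs (fsum f n) <= fsum (fun k => Rabs (f k)) n.
Proof. induction n; simpl. rewrite Rabs_R0; lra. eapply Rle_trans. apply Rabs_triang. lra. Qed.

Lemma fsum_swap (F : nat -> nat -> R) n m :
  fsum (fun i => fsum (fun j => F i j) m) n = fsum (fun j => fsum (fun i => F i j) n) m.
Proof.
  induction n; simpl. rewrite fsum_zero. auto.
  rewrite IHn. rewrite <- fsum_plus. auto.
Qed.

Lemma fsum_support f M n : (forall k, (M <= k)%nat -> f k = 0) -> (M <= n)%nat -> fsum f n = fsum f M.
Proof. intros H Hn. induction Hn. auto. simpl. rewrite H by lia. lra. Qed.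

Lemma fsum_single f j0 n : (forall k, k <> j0 -> f k = 0) -> (j0 < n)%nat -> fsum f n = f j0.
Proof.
  intros H. induction n; intros Hn. lia. simpl.
  destruct (Nat.eq_dec n j0) as [->|Hne].
  - rewrite (fsum_ext f (fun _ => 0)). rewrite fsum_zero. lra. intros k Hk. apply H. lia.
  - rewrite IHn by lia. rewrite (H n) by auto. lra.
Qed.

Lemma fsum_term_le f n k : (forall j, 0 <= f j) -> (k < n)%nat -> f k <= fsum f n.
Proof.
  intros H Hk. induction n. lia. simpl. destruct (Nat.eq_dec k n) as [->|Hne].
  - assert (0 <= fsum f n) by (apply fsum_nonneg; auto). lra.
  - specialize (IHn ltac:(lia)). specialize (H n). lra.
Qed.

Lemma fsum_diff_le f g n m : (forall k, f k <= g k) -> (n <= m)%nat -> fsum f m - fsum f n <= fsum g m - fsum g n.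
Proof. intros H Hnm. induction Hnm. lra. simpl. specialize (H m). lra. Qed.

Lemma is_series_single f j0 : (forall k, k <> j0 -> f k = 0) -> is_series f (f j0).
Proof.
  intros H. apply conv_series. intros eps He. exists (S j0). intros n Hn.
  rewrite (fsum_single f j0) by (auto; lia). rewrite Rminus_eq_0, Rabs_R0. auto.
Qed.

Lemma is_series_finite f M : (forall k, (M <= k)%nat -> f k = 0) -> is_series f (fsum f M).
Proof.
  intros H. apply conv_series. intros eps He. exists M. intros n Hn.
  rewrite (fsum_support f M n) by auto. rewrite Rminus_eq_0, Rabs_R0. auto.
Qed.

Lemma fsum_le_Series f n : (forall k, 0 <= f k) -> ex_series f -> fsum f n <= Series f.
Proof.
  intros H Hs. apply conv_le with (u := fun _ => fsum f n) (v := fsum f).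
  apply conv_const. apply series_conv; auto. exists n. intros m Hm. apply fsum_mono; auto.
Qed.

Lemma Series_nonneg' f : (forall k, 0 <= f k) -> ex_series f -> 0 <= Series f.
Proof. intros H Hs. eapply Rle_trans. 2: apply (fsum_le_Series f O); auto. simpl; lra. Qed.

Lemma bounded_series f B : (forall k, 0 <= f k) -> (forall n, fsum f n <= B) -> ex_series f /\ Series f <= B.
Proof.
  intros H HB.
  destruct (ex_finite_lim_seq_incr (fsum f) B) as [l Hl].
  - intros n. simpl. specialize (H n). lra.
  - auto.
  assert (Hc : conv (fsum f) l).
  { apply is_lim_seq_spec in Hl. intros eps He. destruct (Hl (mkposreal eps He)) as [N HN].
    exists N. intros. apply HN. auto. }
  assert (is_series f l) by (apply conv_series; auto).
  split. exists l; auto. rewrite (is_series_unique _ _ H0).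
  apply conv_le with (u := fsum f) (v := fun _ => B); auto. apply conv_const. exists O; auto.
Qed.

Lemma ex_series_le' f g : (forall k, 0 <= f k <= g k) -> ex_series g -> ex_series f.
Proof.
  intros H Hg. apply (@ex_series_le R_AbsRing R_CompleteNormedModule f g); auto. intros n.
  change (Rabs (f n) <= g n). rewrite Rabs_pos_eq; apply H.
Qed.

Lemma is_series_zero : is_series (fun _ : nat => 0) 0.
Proof. apply conv_series. apply conv_ext with (u := fun _ => 0). intros n. rewrite fsum_zero; auto. apply conv_const. Qed.
From Stdlib Require Cantor. Local Notation ind := Defs.ind.
Lemma conv_fsum (u : nat -> nat -> R) a N : (forall n, (n < N)%nat -> conv (u n) (a n)) ->
  conv (fun m => fsum (fun n => u n m) N) (fsum a N).
Proof.
  induction N; intros H; simpl. apply conv_const.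
  apply conv_plus. apply IHN. intros; apply H; lia. apply H; lia.
Qed.

Lemma fubini (F : nat -> nat -> R) (a : nat -> R) :
  (forall n j, 0 <= F n j) -> (forall n, is_series (F n) (a n)) -> ex_series a ->
  (forall j, ex_series (fun n => F n j)) /\
  is_series (fun j => Series (fun n => F n j)) (Series a).
Proof.
  intros Hpos Hs Ha.
  assert (Hex : forall n, ex_series (F n)) by (intro n; exists (a n); auto).
  assert (HaS : forall n, Series (F n) = a n) by (intro n; apply is_series_unique; auto).
  assert (Hapos : forall n, 0 <= a n) by (intro n; rewrite <- HaS; apply Series_nonneg'; auto).
  assert (Hj : forall j, ex_series (fun n => F n j)).
  { intro j. apply ex_series_le' with (g := a); auto. intro n. split; auto.
    rewrite <- HaS. eapply Rle_trans. 2: apply (fsum_le_Series (F n) (S j)); auto.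
    apply fsum_term_le; auto. }
  split; auto.
  set (b := fun j => Series (fun n => F n j)).
  assert (Hbpos : forall j, 0 <= b j) by (intro; apply Series_nonneg'; auto).
  assert (Hb : forall J, fsum b J <= Series a).
  { intro J. apply conv_le with (u := fun N => fsum (fun n => fsum (fun j => F n j) J) N)
       (v := fsum a).
    - apply conv_ext with (u := fun N => fsum (fun j => fsum (fun n => F n j) N) J).
      intros; rewrite fsum_swap; auto.
      apply conv_fsum. intros j _. apply series_conv; auto.
    - apply series_conv; auto.
    - exists O. intros N _. apply fsum_le. intros n _. rewrite <- HaS.
      apply fsum_le_Series; auto. }
  destruct (bounded_series b (Series a) Hbpos Hb) as [Hbex Hble].
  assert (Hge : Series a <= Series b).
  { apply conv_le with (u := fsum a) (v := fun _ => Series b).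
    - apply series_conv; auto.
    - apply conv_const.
    - exists O. intros N _.
      apply conv_le with (u := fun J => fsum (fun n => fsum (fun j => F n j) J) N) (v := fun _ => Series b).
      + apply conv_fsum. intros n _. rewrite <- HaS. apply series_conv; auto.
      + apply conv_const.
      + exists O. intros J _. rewrite fsum_swap. eapply Rle_trans. 2: apply (fsum_le_Series b J); auto.
        apply fsum_le. intros j _. apply fsum_le_Series; auto. }
  assert (Series b = Series a) by lra. rewrite <- H. apply Series_correct. auto.
Qed.

Lemma Series_ext' f g : (forall n, f n = g n) -> Series f = Series g.
Proof. intros H. apply Series_ext. auto. Qed.
Lemma ind_1 (P : Prop) : P -> ind P = 1.
Proof. intros H. unfold ind. destruct (excluded_middle_informative P); tauto. Qed.
Lemma ind_0 (P : Prop) : ~ P -> ind P = 0.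
Proof. intros H. unfold ind. destruct (excluded_middle_informative P); tauto. Qed.
Lemma ind_bounds (P : Prop) : 0 <= ind P <= 1.
Proof. unfold ind. destruct (excluded_middle_informative P); lra. Qed.
Lemma ind_iff (P Q : Prop) : (P <-> Q) -> ind P = ind Q.
Proof. intros H. unfold ind. destruct (excluded_middle_informative P), (excluded_middle_informative Q); tauto. Qed.
Lemma ind_or (P Q : Prop) : ~ (P /\ Q) -> ind (P \/ Q) = ind P + ind Q.
Proof. intros H. unfold ind.
  destruct (excluded_middle_informative (P \/ Q)), (excluded_middle_informative P), (excluded_middle_informative Q); try tauto; lra. Qed.

Lemma is_series_scal' c f l : is_series f l -> is_series (fun n => c * f n) (c * l).
Proof. intros H. apply is_series_conv in H. apply is_series_conv.
  apply conv_ext with (u := fun n => c * fsum f n). intros; rewrite fsum_scal; auto.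
  apply conv_scal; auto. Qed.

Section Graph.
Variable V : Type.
Variable E : V -> V -> Prop.
Implicit Types (l t : list V) (x y a b : V).

Lemma edge_in_E l x y : dpath E l -> edge_in l x y -> E x y.
Proof.
  induction l as [|a t IH]; simpl. tauto. destruct t as [|b t']. tauto.
  intros [Hab Hd] [[-> ->]|H]; auto.
Qed.

Lemma edge_in_fst l x y : edge_in l x y -> In x l.
Proof.
  induction l as [|a t IH]; simpl. tauto. destruct t as [|b t']. tauto.
  intros [[-> ->]|H]; auto.
Qed.

Lemma edge_in_snd_tail a t x y : edge_in (a :: t) x y -> In y t.
Proof.
  revert a. induction t as [|b t IH]; intros a; simpl. tauto.
  intros [[-> ->]|H]. left; auto. right. eapply IH; eauto.
Qed.

Lemma succ_unique l x y y' : NoDup l -> edge_in l x y -> edge_in l x y' -> y = y'.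
Proof.
  induction l as [|a t IH]; simpl. tauto. destruct t as [|b t']. tauto.
  intros Hnd H1 H2. inversion Hnd; subst.
  destruct H1 as [[-> ->]|H1], H2 as [[Hx ->]|H2]; auto.
  - exfalso. apply H3. eapply edge_in_fst; eauto.
  - exfalso. apply H3. subst. eapply edge_in_fst; eauto.
Qed.

Lemma pred_unique l x x' y : NoDup l -> edge_in l x y -> edge_in l x' y -> x = x'.
Proof.
  induction l as [|a t IH]; simpl. tauto. destruct t as [|b t']. tauto.
  intros Hnd H1 H2. inversion Hnd; subst. inversion H4; subst.
  destruct H1 as [[-> ->]|H1], H2 as [[Hx Hy]|H2]; auto.
  - exfalso. apply H5. eapply edge_in_snd_tail; eauto.
  - exfalso. subst. apply H5. eapply edge_in_snd_tail; eauto.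
Qed.

Lemma out_in l x : NoDup l -> l <> nil ->
  ind (exists y, edge_in l x y) - ind (exists y, edge_in l y x) = ind (hd x l = x) - ind (last l x = x).
Proof.
  induction l as [|a t IH]; intros Hnd Hne. congruence.
  destruct t as [|b t'].
  - simpl. rewrite !ind_0 by (intros [y Hy]; auto). lra.
  - inversion Hnd; subst.
    assert (E1 : ind (exists y, edge_in (a :: b :: t') x y) = ind (a = x) + ind (exists y, edge_in (b :: t') x y)).
    { rewrite <- ind_or. apply ind_iff. simpl. split.
      - intros [y [[-> ->]|H]]; eauto.
      - intros [->|[y H]]; eauto.
      - intros [-> [y H]]. apply H1. eapply edge_in_fst; eauto. }
    assert (E2 : ind (exists y, edge_in (a :: b :: t') y x) = ind (b = x) + ind (exists y, edge_in (b :: t') y x)).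
    { rewrite <- ind_or. apply ind_iff. simpl. split.
      - intros [y [[-> ->]|H]]; eauto.
      - intros [->|[y H]]; eauto.
      - intros [-> [y H]]. inversion H2; subst. apply H4. eapply edge_in_snd_tail; eauto. }
    rewrite E1, E2. specialize (IH H2 ltac:(congruence)). simpl in IH |- *.
    replace (last (a :: b :: t') x) with (last (b :: t') x) by reflexivity. lra.
Qed.

Variable e : nat -> V.
Hypothesis He : enumeration e.

Lemma series_unique_pt (P : V -> Prop) : (forall y y', P y -> P y' -> y = y') ->
  is_series (fun j => ind (P (e j))) (ind (exists y, P y)).
Proof.
  intros HP. destruct He as [Hinj Hsur].
  destruct (classic (exists y, P y)) as [[y Hy]|Hn].
  - destruct (Hsur y) as [j0 Hj0]. rewrite (ind_1 (exists y, P y)) by eauto.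
    replace 1 with (ind (P (e j0))) by (apply ind_1; subst; auto).
    apply (is_series_single (fun j => ind (P (e j))) j0). intros k Hk. apply ind_0. intros Hk'. apply Hk. apply Hinj.
    rewrite Hj0. apply HP; subst; auto.
  - rewrite ind_0 by auto. replace 0 with (fsum (fun j => ind (P (e j))) O) by reflexivity.
    apply is_series_finite. intros k _. apply ind_0. intros Hk. apply Hn; eauto.
Qed.

Lemma div_formula (gam : nat -> list V) (q : nat -> R) (Q : V -> V -> R) :
  (forall n, sa_path E (gam n)) -> (forall n, 0 <= q n) -> ex_series q ->
  (forall x y, E x y -> is_series (fun n => q n * Qpath (gam n) x y) (Q x y)) ->
  forall x, is_series (fun n => q n * (ind (hd x (gam n) = x) - ind (last (gam n) x = x))) (div e E Q x).
Proof.
  intros Hsa Hq Hqs HQ x.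
  assert (HQp : forall n u v, ~ E u v -> Qpath (gam n) u v = 0).
  { intros n u v Hn. unfold Qpath. apply ind_0. intros Hi. apply Hn.
    eapply edge_in_E; eauto. apply (Hsa n). }
  assert (Hqn : forall n P, 0 <= q n * ind P <= q n).
  { intros n P. pose proof (ind_bounds P). specialize (Hq n). split; nra. }
  set (aout := fun n => q n * ind (exists y, edge_in (gam n) x y)).
  set (ain := fun n => q n * ind (exists y, edge_in (gam n) y x)).
  assert (Haout : ex_series aout) by (apply ex_series_le' with (g := q); auto; intros; apply Hqn).
  assert (Hain : ex_series ain) by (apply ex_series_le' with (g := q); auto; intros; apply Hqn).
  assert (Hout : Series (fun j => ind (E x (e j)) * Q x (e j)) = Series aout).
  { destruct (fubini (fun n j => q n * Qpath (gam n) x (e j)) aout) as [_ Hf]; auto.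
    - intros n j. unfold Qpath. apply Hqn.
    - intros n. unfold aout. apply is_series_scal'. unfold Qpath.
      apply series_unique_pt with (P := fun y => edge_in (gam n) x y).
      intros y y'. apply succ_unique. apply (Hsa n).
    - rewrite <- (is_series_unique _ _ Hf). apply Series_ext. intros j.
      destruct (classic (E x (e j))) as [HE|HE].
      + rewrite ind_1 by auto. rewrite Rmult_1_l. symmetry. apply is_series_unique. auto.
      + rewrite ind_0 by auto. rewrite Rmult_0_l. symmetry.
        rewrite (Series_ext _ (fun _ => 0)). apply is_series_unique. apply is_series_zero.
        intros n. rewrite HQp by auto. ring. }
  assert (Hin : Series (fun j => ind (E (e j) x) * Q (e j) x) = Series ain).
  { destruct (fubini (fun n j => q n * Qpath (gam n) (e j) x) ain) as [_ Hf]; auto.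
    - intros n j. unfold Qpath. apply Hqn.
    - intros n. unfold ain. apply is_series_scal'. unfold Qpath.
      apply series_unique_pt with (P := fun y => edge_in (gam n) y x).
      intros y y'. apply pred_unique. apply (Hsa n).
    - rewrite <- (is_series_unique _ _ Hf). apply Series_ext. intros j.
      destruct (classic (E (e j) x)) as [HE|HE].
      + rewrite ind_1 by auto. rewrite Rmult_1_l. symmetry. apply is_series_unique. auto.
      + rewrite ind_0 by auto. rewrite Rmult_0_l. symmetry.
        rewrite (Series_ext _ (fun _ => 0)). apply is_series_unique. apply is_series_zero.
        intros n. rewrite HQp by auto. ring. }
  unfold div. rewrite Hout, Hin. rewrite <- Series_minus by auto.
  apply is_series_ext with (a := fun n => aout n - ain n).
  - intros n. unfold aout, ain. rewrite <- Rmult_minus_distr_l. f_equal.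
    destruct (Hsa n) as [Hne [Hnd _]]. apply out_in; auto.
  - apply Series_correct. apply (ex_series_minus aout ain); auto.
Qed.

End Graph.
Lemma hd_default {A} (l : list A) x z : l <> nil -> hd x l = hd z l.
Proof. destruct l; simpl; congruence. Qed.
Lemma last_default {A} (l : list A) x z : l <> nil -> last l x = last l z.
Proof. induction l as [|a t IH]; intros H. congruence. destruct t. reflexivity.
  simpl. apply IH. congruence. Qed.

Lemma fsum_nonzero f n : fsum f n <> 0 -> exists k, (k < n)%nat /\ f k <> 0.
Proof.
  induction n; simpl; intros H. lra.
  destruct (Req_dec (f n) 0) as [Hz|Hz].
  - destruct IHn as [k [Hk Hk']]. lra. exists k; split; auto.
  - exists n; split; auto.
Qed.

Section Approx.
Variable V : Type.
Variable E : V -> V -> Prop.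
Variable e : nat -> V.
Hypothesis He : enumeration e.
Implicit Types (l t : list V) (x y a b : V).

Definition reach a b := exists l, dpath E (a :: l ++ b :: nil).
Definition Rel i j := reach (e i) (e j).

Definition fc (p : nat -> nat -> R) (M : nat) : Prop :=
  (forall i j, 0 <= p i j) /\ (forall i j, p i j <> 0 -> Rel i j) /\
  (forall i j, (M <= i \/ M <= j)%nat -> p i j = 0).

Definition row (p : nat -> nat -> R) M i := fsum (p i) M.
Definition col (p : nat -> nat -> R) M j := fsum (fun i => p i j) M.

Lemma sa_reach l : sa_path E l -> hd (e 0) l <> last l (e 0) -> reach (hd (e 0) l) (last l (e 0)).
Proof.
  intros [Hne [_ Hd]] Hdiff. destruct l as [|a t]. congruence.
  destruct t as [|c t']. simpl in Hdiff. congruence.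
  assert (Hn : c :: t' <> nil) by congruence.
  destruct (exists_last Hn) as [l' [b Hb]].
  change (hd (e 0) (a :: c :: t')) with a. rewrite Hb in Hd |- *. exists l'.
  replace (last (a :: l' ++ b :: nil) (e 0)) with b. auto.
  change (a :: l' ++ b :: nil) with ((a :: l') ++ b :: nil). rewrite last_last. auto.
Qed.

Lemma bound_indices (gam : nat -> list V) N : exists M, forall n i, (n < N)%nat ->
  (hd (e 0) (gam n) = e i \/ last (gam n) (e 0) = e i) -> (i < M)%nat.
Proof.
  destruct He as [Hinj Hsur].
  induction N.
  - exists O. intros. lia.
  - destruct IHN as [M HM]. destruct (Hsur (hd (e 0) (gam N))) as [i1 Hi1].
    destruct (Hsur (last (gam N) (e 0))) as [i2 Hi2].
    exists (S (M + i1 + i2)). intros n i Hn Hi.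
    destruct (Nat.eq_dec n N) as [->|Hne].
    + destruct Hi as [Hi|Hi].
      * rewrite <- Hi1 in Hi. apply Hinj in Hi. lia.
      * rewrite <- Hi2 in Hi. apply Hinj in Hi. lia.
    + specialize (HM n i ltac:(lia) Hi). lia.
Qed.

Lemma approx_D (d : V -> R) : Dset e E d -> forall eps, 0 < eps ->
  exists p M, fc p M /\
    ex_series (fun i => Rabs (d (e i) - (row p M i - col p M i))) /\
    Series (fun i => Rabs (d (e i) - (row p M i - col p M i))) < eps.
Proof.
  intros [Q [Hflow [[gam [q [Hsa [Hq [Hqs HQ]]]]] Hdiv]]] eps Heps.
  assert (He' := He). destruct He' as [Hinj Hsur].
  set (e0 := e 0).
  assert (Hne : forall n, gam n <> nil) by (intro n; apply (Hsa n)).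
  set (c := fun n x => ind (hd e0 (gam n) = x) - ind (last (gam n) e0 = x)).
  assert (Hd : forall x, is_series (fun n => q n * c n x) (d x)).
  { intros x. rewrite Hdiv. eapply is_series_ext. 2: apply (div_formula _ _ _ He gam q Q Hsa Hq Hqs HQ x).
    intros n. unfold c. rewrite (hd_default _ x e0), (last_default _ x e0); auto. }
  assert (Hqc := series_conv q Hqs).
  destruct (Hqc (eps / 2) ltac:(lra)) as [N HN]. specialize (HN N (le_n _)).
  set (r := fun n => if Nat.ltb n N then 0 else q n).
  assert (Hr0 : forall n, 0 <= r n) by (intro n; unfold r; destruct (Nat.ltb n N); auto; lra).
  assert (Hrq : forall n, r n <= q n) by (intro n; unfold r; destruct (Nat.ltb n N); auto; lra).
  assert (Hrs : ex_series r) by (apply ex_series_le' with (g := q); auto).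
  assert (HqmR : is_series (fun n => q n - r n) (fsum q N)).
  { replace (fsum q N) with (fsum (fun n => q n - r n) N).
    apply is_series_finite. intros k Hk. unfold r. replace (Nat.ltb k N) with false. ring.
    symmetry. apply Nat.ltb_ge. auto.
    apply fsum_ext. intros k Hk. unfold r. replace (Nat.ltb k N) with true. ring.
    symmetry. apply Nat.ltb_lt. auto. }
  assert (HSr : Series r = Series q - fsum q N).
  { rewrite <- (is_series_unique _ _ HqmR). rewrite <- Series_minus; auto.
    apply Series_ext. intros; ring. exists (fsum q N); auto. }
  assert (Htail : 2 * Series r < eps).
  { rewrite HSr. pose proof (fsum_le_Series q N Hq Hqs). apply Rabs_def2 in HN. lra. }
  set (h := fun x => fsum (fun n => q n * c n x) N).
  assert (Hcb : forall n x, Rabs (c n x) <= ind (hd e0 (gam n) = x) + ind (last (gam n) e0 = x)).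
  { intros n x. unfold c. pose proof (ind_bounds (hd e0 (gam n) = x)). pose proof (ind_bounds (last (gam n) e0 = x)).
    apply Rabs_le; lra. }
  set (F := fun n j => r n * (ind (hd e0 (gam n) = e j) + ind (last (gam n) e0 = e j))).
  destruct (fubini F (fun n => 2 * r n)) as [HFj HF].
  { intros n j. unfold F. pose proof (ind_bounds (hd e0 (gam n) = e j)). pose proof (ind_bounds (last (gam n) e0 = e j)).
    specialize (Hr0 n). nra. }
  { intros n. unfold F. replace (2 * r n) with (r n * (1 + 1)) by ring. apply is_series_scal'.
    apply (is_series_plus (fun j => ind (hd e0 (gam n) = e j)) (fun j => ind (last (gam n) e0 = e j))).
    - replace 1 with (ind (exists y, hd e0 (gam n) = y)). apply series_unique_pt; auto. intros; congruence.
      apply ind_1. eauto.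
    - replace 1 with (ind (exists y, last (gam n) e0 = y)). apply series_unique_pt; auto. intros; congruence.
      apply ind_1. eauto. }
  { apply (ex_series_scal_l 2 r). auto. }
  assert (Hdiff : forall x, Rabs (d x - h x) <= Series (fun n => r n * (ind (hd e0 (gam n) = x) + ind (last (gam n) e0 = x)))).
  { intros x.
    assert (Hh : is_series (fun n => (q n - r n) * c n x) (h x)).
    { unfold h. replace (fsum (fun n => q n * c n x) N) with (fsum (fun n => (q n - r n) * c n x) N).
      apply is_series_finite. intros k Hk. unfold r. replace (Nat.ltb k N) with false. ring.
      symmetry. apply Nat.ltb_ge. auto.
      apply fsum_ext. intros k Hk. unfold r. replace (Nat.ltb k N) with true. ring.
      symmetry. apply Nat.ltb_lt. auto. }
    assert (Hex2 : ex_series (fun n => r n * (ind (hd e0 (gam n) = x) + ind (last (gam n) e0 = x)))).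
    { apply ex_series_le' with (g := fun n => 2 * q n). intros n.
      pose proof (ind_bounds (hd e0 (gam n) = x)). pose proof (ind_bounds (last (gam n) e0 = x)).
      specialize (Hr0 n); specialize (Hrq n). split; nra. apply (ex_series_scal_l 2 q). auto. }
    assert (Hrc : Series (fun n => r n * c n x) = d x - h x).
    { rewrite <- (is_series_unique _ _ (Hd x)), <- (is_series_unique _ _ Hh).
      rewrite <- Series_minus. apply Series_ext. intros; ring. exists (d x); auto. exists (h x); auto. }
    rewrite <- Hrc. eapply Rle_trans. apply Series_Rabs.
    - apply ex_series_le' with (g := fun n => r n * (ind (hd e0 (gam n) = x) + ind (last (gam n) e0 = x))); auto.
      intros n. split. apply Rabs_pos. rewrite Rabs_mult, (Rabs_pos_eq (r n)) by auto.
      apply Rmult_le_compat_l; auto.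
    - apply Series_le; auto. intros n. split. apply Rabs_pos. rewrite Rabs_mult, (Rabs_pos_eq (r n)) by auto.
      apply Rmult_le_compat_l; auto. }
  destruct (bound_indices gam N) as [M HM].
  set (p := fun i j => fsum (fun n => q n * ind (hd e0 (gam n) = e i /\ last (gam n) e0 = e j /\ i <> j)) N).
  exists p, M.
  assert (Hrow : forall i, row p M i - col p M i = h (e i)).
  { intros i. unfold row, col, p, h.
    rewrite fsum_swap. rewrite (fsum_swap (fun i0 n => q n * _)).
    rewrite <- fsum_minus. apply fsum_ext. intros n Hn.
    rewrite !fsum_scal. rewrite <- Rmult_minus_distr_l. f_equal.
    destruct (Hsur (last (gam n) e0)) as [j0 Hj0].
    destruct (Hsur (hd e0 (gam n))) as [i0 Hi0].
    rewrite (fsum_single _ j0), (fsum_single _ i0).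
    - unfold c. destruct (Nat.eq_dec i0 j0) as [->|Hij].
      + rewrite Hj0 in Hi0. rewrite !ind_0 by (let A := fresh in let B := fresh in let C := fresh in intros [A [B C]]; apply C; apply Hinj; congruence).
        destruct (classic (hd e0 (gam n) = e i)).
        rewrite !ind_1 by congruence. ring. rewrite !ind_0 by congruence. ring.
      + destruct (Nat.eq_dec i j0) as [->|Hij0].
        * rewrite (ind_0 (hd e0 (gam n) = e j0 /\ _)) by tauto.
          rewrite (ind_0 (hd e0 (gam n) = e j0)). 2:{ intros Hc; rewrite <- Hi0 in Hc; apply Hinj in Hc; congruence. }
          destruct (Nat.eq_dec i0 j0). congruence. rewrite !ind_1 by (repeat split; congruence). ring.
        * rewrite (ind_0 (hd e0 (gam n) = e i0 /\ last (gam n) e0 = e i /\ i0 <> i)).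
          2:{ intros [_ [Hc _]]. rewrite <- Hj0 in Hc. apply Hinj in Hc. congruence. }
          rewrite (ind_0 (last (gam n) e0 = e i)). 2:{ intros Hc. rewrite <- Hj0 in Hc. apply Hinj in Hc. congruence. }
          destruct (classic (hd e0 (gam n) = e i)) as [Hc|Hc].
          -- rewrite !ind_1 by (repeat split; congruence). ring.
          -- rewrite !ind_0 by tauto. ring.
    - intros k Hk. apply ind_0. intros [Hc _]. apply Hk. apply Hinj. congruence.
    - apply (HM n i0 Hn). left. auto.
    - intros k Hk. apply ind_0. intros [_ [Hc _]]. apply Hk. apply Hinj. congruence.
    - apply (HM n j0 Hn). right. auto. }
  split; [|split].
  - split; [|split].
    + intros i j. unfold p. apply fsum_nonneg. intros n. pose proof (ind_bounds (hd e0 (gam n) = e i /\ last (gam n) e0 = e j /\ i <> j)).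
      specialize (Hq n). nra.
    + intros i j Hp. unfold p in Hp. apply fsum_nonzero in Hp. destruct Hp as [n [Hn Hnz]].
      destruct (classic (hd e0 (gam n) = e i /\ last (gam n) e0 = e j /\ i <> j)) as [[H1 [H2 H3]]|Hc].
      * unfold Rel. rewrite <- H1, <- H2. apply sa_reach; auto. intros Hc; apply H3; apply Hinj; rewrite <- H1, <- H2; exact Hc.
      * rewrite ind_0 in Hnz by auto. lra.
    + intros i j Hij. unfold p. rewrite <- (fsum_zero N). apply fsum_ext. intros n Hn.
      rewrite ind_0. ring. intros [H1 [H2 _]]. destruct Hij as [Hi|Hj].
      * specialize (HM n i Hn (or_introl H1)). lia.
      * specialize (HM n j Hn (or_intror H2)). lia.
  - apply ex_series_le' with (g := fun j => Series (fun n => F n j)).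
    + intros j. split. apply Rabs_pos. rewrite Hrow. apply Hdiff.
    + exists (Series (fun n => 2 * r n)). auto.
  - eapply Rle_lt_trans. apply Series_le with (b := fun j => Series (fun n => F n j)).
    + intros j. split. apply Rabs_pos. rewrite Hrow. apply Hdiff.
    + exists (Series (fun n => 2 * r n)). auto.
    + rewrite (is_series_unique _ _ HF). rewrite Series_scal_l. auto.
Qed.

End Approx.
Arguments reach {V} E a b.
Arguments Rel {V} E e i j.
Arguments fc {V} E e p M.
Section Elim.
Variable Rl : nat -> nat -> Prop.
Hypothesis Rirr : forall i, ~ Rl i i.
Hypothesis Rtr : forall i j k, Rl i j -> Rl j k -> Rl i k.

Definition fcr (p : nat -> nat -> R) (M : nat) : Prop :=
  (forall i j, 0 <= p i j) /\ (forall i j, p i j <> 0 -> Rl i j) /\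
  (forall i j, (M <= i \/ M <= j)%nat -> p i j = 0).

Definition ite (b : bool) (x : R) := if b then x else 0.

Definition elim1 (p : nat -> nat -> R) M v i j :=
  let I := col p M v in let O := row p M v in let m := Rmax I O in
  p i j - ite (Nat.eqb j v) (p i v * (O / m)) - ite (Nat.eqb i v) (p v j * (I / m)) + p i v * (p v j / m).

Lemma div_bounds a m : 0 <= a <= m -> 0 < m -> 0 <= a / m <= 1.
Proof.
  intros Ha Hm. assert (0 < / m) by (apply Rinv_0_lt_compat; auto). unfold Rdiv. split.
  apply Rmult_le_pos; lra.
  replace 1 with (m * / m) by (field; lra). apply Rmult_le_compat_r; lra.
Qed.

Lemma fsum_ite_eq (f : nat -> R) v M : (v < M)%nat -> fsum (fun j => ite (Nat.eqb j v) (f j)) M = f v.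
Proof.
  intros H. rewrite (fsum_single _ v); auto. unfold ite. rewrite Nat.eqb_refl. auto.
  intros k Hk. unfold ite. apply Nat.eqb_neq in Hk. rewrite Hk. auto.
Qed.

Lemma row_nonneg p M i : fcr p M -> 0 <= row p M i.
Proof. intros [H _]. apply fsum_nonneg. auto. Qed.
Lemma col_nonneg p M i : fcr p M -> 0 <= col p M i.
Proof. intros [H _]. apply fsum_nonneg. auto. Qed.

Lemma pvv p M v : fcr p M -> p v v = 0.
Proof. intros [_ [H _]]. destruct (Req_dec (p v v) 0); auto. exfalso. apply (Rirr v). auto. Qed.

Lemma elim1_spec p M v : fcr p M -> (v < M)%nat ->
  fcr (elim1 p M v) M /\
  (forall u, u <> v -> row (elim1 p M v) M u = row p M u /\ col (elim1 p M v) M u = col p M u) /\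
  row (elim1 p M v) M v - col (elim1 p M v) M v = row p M v - col p M v /\
  (row (elim1 p M v) M v = 0 \/ col (elim1 p M v) M v = 0).
Proof.
  intros Hp Hv.
  pose proof (row_nonneg p M v Hp) as HO. pose proof (col_nonneg p M v Hp) as HI.
  set (O := row p M v) in *. set (I := col p M v) in *. set (m := Rmax I O).
  assert (HIm : I <= m) by apply Rmax_l. assert (HOm : O <= m) by apply Rmax_r.
  assert (Hm0 : 0 <= m) by lra.
  assert (HOm1 : 0 <= O / m <= 1).
  { destruct (Req_dec m 0) as [Hz|Hz]. rewrite Hz. unfold Rdiv. rewrite Rinv_0. lra.
    assert (0 < m) by (destruct Hm0 as [?| ?]; [auto| congruence]).
    apply div_bounds; lra. }
  assert (HIm1 : 0 <= I / m <= 1).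
  { destruct (Req_dec m 0) as [Hz|Hz]. rewrite Hz. unfold Rdiv. rewrite Rinv_0. lra.
    assert (0 < m) by (destruct Hm0 as [?| ?]; [auto| congruence]).
    apply div_bounds; lra. }
  destruct Hp as [Hpos [HRl Hsup]].
  assert (Hvv : p v v = 0) by (apply (pvv p M); split; auto).
  assert (Hdiv : forall a, 0 <= a -> 0 <= a / m).
  { intros a Ha. destruct (Req_dec m 0) as [Hz|Hz]. rewrite Hz. unfold Rdiv. rewrite Rinv_0. lra.
    assert (0 < m) by (destruct Hm0 as [?| ?]; [auto| congruence]).
    unfold Rdiv. apply Rmult_le_pos; auto. left; apply Rinv_0_lt_compat; auto. }
  assert (Hval : forall i j, elim1 p M v i j =
     if Nat.eq_dec i v then (if Nat.eq_dec j v then 0 else p v j * (1 - I / m))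
     else (if Nat.eq_dec j v then p i v * (1 - O / m) else p i j + p i v * (p v j / m))).
  { intros i j. unfold elim1. fold O I m. unfold ite.
    destruct (Nat.eq_dec i v) as [->|Hi]; destruct (Nat.eq_dec j v) as [->|Hj];
      rewrite ?Nat.eqb_refl; try (apply Nat.eqb_neq in Hi; rewrite Hi); try (apply Nat.eqb_neq in Hj; rewrite Hj);
      rewrite ?Hvv; unfold Rdiv; ring. }
  assert (Hel : forall i j, elim1 p M v i j = p i j - ite (Nat.eqb j v) (p i v * (O / m))
      - ite (Nat.eqb i v) (p v j * (I / m)) + p i v * (p v j / m)) by reflexivity.
  assert (Hrow : forall i, row (elim1 p M v) M i =
      row p M i - p i v * (O / m) - ite (Nat.eqb i v) (O * (I / m)) + p i v * (O / m)).
  { intros i. unfold row at 1.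
    rewrite (fsum_ext _ (fun j => p i j - ite (Nat.eqb j v) (p i v * (O / m))
      - ite (Nat.eqb i v) (p v j * (I / m)) + (p i v / m) * p v j))
      by (intros; rewrite Hel; unfold Rdiv; ring).
    rewrite fsum_plus, !fsum_minus, fsum_scal.
    rewrite (fsum_ite_eq (fun _ => p i v * (O / m))) by auto.
    change (fsum (p i) M) with (row p M i). change (fsum (p v) M) with O.
    unfold ite. destruct (Nat.eqb i v).
    - rewrite (fsum_ext _ (fun j => (I / m) * p v j)) by (intros; ring).
      rewrite fsum_scal. change (fsum (p v) M) with O. unfold Rdiv. ring.
    - rewrite fsum_zero. unfold Rdiv. ring. }
  assert (Hcol : forall j, col (elim1 p M v) M j =
      col p M j - ite (Nat.eqb j v) (I * (O / m)) - p v j * (I / m) + I * (p v j / m)).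
  { intros j. unfold col at 1.
    rewrite (fsum_ext _ (fun i => p i j - ite (Nat.eqb j v) (p i v * (O / m))
      - ite (Nat.eqb i v) (p v j * (I / m)) + (p v j / m) * p i v))
      by (intros; rewrite Hel; unfold Rdiv; ring).
    rewrite fsum_plus, !fsum_minus, fsum_scal.
    rewrite (fsum_ite_eq (fun _ => p v j * (I / m))) by auto.
    change (fsum (fun i => p i j) M) with (col p M j). change (fsum (fun i => p i v) M) with I.
    unfold ite. destruct (Nat.eqb j v).
    - rewrite (fsum_ext _ (fun i => (O / m) * p i v)) by (intros; ring).
      rewrite fsum_scal. change (fsum (fun i => p i v) M) with I. unfold Rdiv. ring.
    - rewrite fsum_zero. unfold Rdiv. ring. }
  split; [|split; [|split]].
  - split; [|split].
    + intros i j. rewrite Hval.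
      destruct (Nat.eq_dec i v), (Nat.eq_dec j v); try lra.
      * pose proof (Hpos v j). nra.
      * pose proof (Hpos i v). nra.
      * pose proof (Hpos i j). assert (0 <= p i v * (p v j / m)) by (apply Rmult_le_pos; [apply Hpos | apply Hdiv, Hpos]). lra.
    + intros i j Hne. rewrite Hval in Hne.
      destruct (Nat.eq_dec i v) as [->|Hi], (Nat.eq_dec j v) as [->|Hj].
      * lra.
      * apply HRl. intro Hc. rewrite Hc in Hne. lra.
      * apply HRl. intro Hc. rewrite Hc in Hne. lra.
      * destruct (Req_dec (p i j) 0) as [Hz|Hz]; auto.
        destruct (Req_dec (p i v) 0) as [Hz2|Hz2]. rewrite Hz, Hz2 in Hne. lra.
        destruct (Req_dec (p v j) 0) as [Hz3|Hz3]. rewrite Hz, Hz3 in Hne. unfold Rdiv in Hne. lra.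
        eapply Rtr; eauto.
    + intros i j Hij. rewrite Hval.
      destruct (Nat.eq_dec i v) as [->|Hi], (Nat.eq_dec j v) as [->|Hj]; try lia.
      * rewrite (Hsup v j) by lia. ring.
      * rewrite (Hsup i v) by lia. ring.
      * rewrite (Hsup i j) by auto. destruct Hij as [Hij|Hij].
        rewrite (Hsup i v) by lia. ring. rewrite (Hsup v j) by lia. unfold Rdiv. ring.
  - intros u Hu. rewrite Hrow, Hcol. unfold ite. apply Nat.eqb_neq in Hu. rewrite Hu.
    split. ring. unfold Rdiv. ring.
  - rewrite Hrow, Hcol. rewrite Hvv. unfold ite. rewrite Nat.eqb_refl. fold O I. unfold Rdiv. ring.
  - rewrite Hrow, Hcol. rewrite Hvv. unfold ite. rewrite Nat.eqb_refl. fold O I.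
    replace (O - 0 * (O / m) - O * (I / m) + 0 * (O / m)) with (O * (1 - I / m)) by ring.
    replace (I - I * (O / m) - 0 * (I / m) + I * (0 / m)) with (I * (1 - O / m)) by (unfold Rdiv; ring).
    unfold m. destruct (Rle_dec I O).
    + rewrite Rmax_right by auto. destruct (Req_dec O 0) as [Hz|Hz].
      * left. rewrite Hz. ring.
      * right. unfold Rdiv. rewrite Rinv_r by auto. ring.
    + rewrite Rmax_left by lra. left. unfold Rdiv. rewrite Rinv_r by lra. ring.
Qed.

Fixpoint elim_upto (p : nat -> nat -> R) M k : nat -> nat -> R :=
  match k with O => p | S k' => elim1 (elim_upto p M k') M k' end.

Lemma elim_upto_spec p M k : fcr p M -> (k <= M)%nat ->
  fcr (elim_upto p M k) M /\
  (forall u, row (elim_upto p M k) M u - col (elim_upto p M k) M u = row p M u - col p M u) /\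
  (forall u, (u < k)%nat -> row (elim_upto p M k) M u = 0 \/ col (elim_upto p M k) M u = 0).
Proof.
  intros Hp. induction k; intros Hk.
  - simpl. split; auto. split; auto. intros; lia.
  - destruct IHk as [H1 [H2 H3]]. lia. simpl.
    destruct (elim1_spec (elim_upto p M k) M k H1 ltac:(lia)) as [G1 [G2 [G3 G4]]].
    split; auto. split.
    + intros u. destruct (Nat.eq_dec u k) as [->|Hu]. rewrite G3. auto.
      destruct (G2 u Hu) as [-> ->]. auto.
    + intros u Hu. destruct (Nat.eq_dec u k) as [->|Hu']. auto.
      destruct (G2 u Hu') as [-> ->]. apply H3. lia.
Qed.

Lemma minimal_coupling p M : fcr p M -> exists p', fcr p' M /\
  (forall u, row p' M u - col p' M u = row p M u - col p M u) /\
  (forall u, row p' M u = 0 \/ col p' M u = 0).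
Proof.
  intros Hp. destruct (elim_upto_spec p M M Hp (le_n _)) as [H1 [H2 H3]].
  exists (elim_upto p M M). split; auto. split; auto.
  intros u. destruct (Nat.lt_ge_cases u M) as [Hu|Hu]. auto.
  left. unfold row. rewrite <- (fsum_zero M). apply fsum_ext. intros j _.
  destruct H1 as [_ [_ Hs]]. apply Hs. auto.
Qed.

End Elim.
Lemma small_inv eps : 0 < eps -> exists N, forall k, (N <= k)%nat -> / (INR k + 1) < eps.
Proof.
  intros He. destruct (INR_archimed eps 1 He) as [N HN]. exists N. intros k Hk.
  apply le_INR in Hk. pose proof (pos_INR N).
  assert (0 < INR k + 1) by lra.
  apply (Rmult_lt_reg_r (INR k + 1)); auto. rewrite Rinv_l by lra. nra.
Qed.

Definition sincr (s : nat -> nat) := forall k, (s k < s (S k))%nat.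

Lemma sincr_ge s : sincr s -> forall k, (k <= s k)%nat.
Proof. intros H k. induction k. lia. specialize (H k). lia. Qed.

Lemma sincr_lt s : sincr s -> forall a b, (a < b)%nat -> (s a < s b)%nat.
Proof. intros H a b Hab. induction Hab. apply H. specialize (H m). lia. Qed.

Lemma sincr_le s : sincr s -> forall a b, (a <= b)%nat -> (s a <= s b)%nat.
Proof. intros H a b Hab. destruct (Nat.eq_dec a b). subst; lia. pose proof (sincr_lt s H a b). lia. Qed.

Lemma BW_sub (v : nat -> R) B : (forall k, Rabs (v k) <= B) ->
  exists s, sincr s /\ exists l, conv (fun k => v (s k)) l.
Proof.
  intros HB.
  destruct (Bolzano_Weierstrass v (fun c => -B <= c <= B) (compact_P3 (-B) B)) as [l Hl].
  { intros n. specialize (HB n). pose proof (Rle_abs (v n)). pose proof (Rle_abs (- v n)). rewrite Rabs_Ropp in *. lra. }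
  assert (Hpick : forall N k : nat, exists p, (N <= p)%nat /\ Rabs (v p - l) < / (INR k + 1)).
  { intros N k. assert (Hpos : 0 < / (INR k + 1)) by (apply Rinv_0_lt_compat; pose proof (pos_INR k); lra).
    assert (Hnb : neighbourhood (disc l (mkposreal _ Hpos)) l).
    { exists (mkposreal _ Hpos). intros y Hy. auto. }
    destruct (Hl (disc l (mkposreal _ Hpos)) N Hnb) as [p [Hp1 Hp2]].
    exists p. split; auto. }
  set (pick := fun N k => proj1_sig (constructive_indefinite_description _ (Hpick N k))).
  assert (Hpk : forall N k, (N <= pick N k)%nat /\ Rabs (v (pick N k) - l) < / (INR k + 1)).
  { intros N k. unfold pick. destruct (constructive_indefinite_description _ (Hpick N k)). auto. }
  set (s := fix s k := match k with O => pick O O | S k' => pick (S (s k')) (S k') end).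
  exists s. split.
  - intros k. simpl. destruct (Hpk (S (s k)) (S k)). lia.
  - exists l. intros eps He. destruct (small_inv eps He) as [N HN]. exists N. intros k Hk.
    eapply Rlt_trans. 2: apply (HN k Hk). destruct k; simpl; apply Hpk.
Qed.

Section Diag.
Variable u : nat -> nat -> R.
Variable B : nat -> R.
Hypothesis HB : forall k c, Rabs (u k c) <= B c.

Lemma sub_exists (psi : nat -> nat) c : exists s, sincr s /\ exists l, conv (fun k => u (psi (s k)) c) l.
Proof. apply (BW_sub (fun k => u (psi k) c) (B c)). intros; apply HB. Qed.

Definition ext (psi : nat -> nat) c : nat -> nat :=
  fun k => psi (proj1_sig (constructive_indefinite_description _ (sub_exists psi c)) k).

Lemma ext_spec psi c : (exists tau, sincr tau /\ forall k, ext psi c k = psi (tau k)) /\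
  exists l, conv (fun k => u (ext psi c k) c) l.
Proof.
  unfold ext. destruct (constructive_indefinite_description _ (sub_exists psi c)) as [s [Hs Hl]].
  simpl. split; eauto.
Qed.

Fixpoint Psi (c : nat) : nat -> nat :=
  match c with O => ext (fun k => k) O | S c' => ext (Psi c') (S c') end.

Lemma Psi_sincr c : sincr (Psi c).
Proof.
  induction c; simpl.
  - destruct (ext_spec (fun k => k) O) as [[tau [Ht Hk]] _]. intros k. rewrite !Hk. apply Ht.
  - destruct (ext_spec (Psi c) (S c)) as [[tau [Ht Hk]] _]. intros k. rewrite !Hk.
    apply sincr_lt; auto.
Qed.

Lemma Psi_conv c : exists l, conv (fun k => u (Psi c k) c) l.
Proof. destruct c; simpl; apply ext_spec. Qed.

Lemma Psi_sub c d : exists tau, sincr tau /\ forall k, Psi (c + d) k = Psi c (tau k).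
Proof.
  induction d.
  - exists (fun k => k). split. intros k; lia. intros k. rewrite Nat.add_0_r. auto.
  - destruct IHd as [tau [Ht Hk]]. rewrite Nat.add_succ_r. simpl.
    destruct (ext_spec (Psi (c + d)) (S (c + d))) as [[tau2 [Ht2 Hk2]] _].
    exists (fun k => tau (tau2 k)). split.
    + intros k. apply sincr_lt; auto.
    + intros k. rewrite Hk2, Hk. auto.
Qed.

Lemma diagonal : exists phi, sincr phi /\ forall c, exists l, conv (fun k => u (phi k) c) l.
Proof.
  exists (fun k => Psi k k). split.
  - intros k. destruct (Psi_sub k 1) as [tau [Ht Hk]]. rewrite Nat.add_1_r in Hk. rewrite Hk.
    apply sincr_lt. apply Psi_sincr. pose proof (sincr_ge tau Ht (S k)). lia.
  - intros c. destruct (Psi_conv c) as [l Hl]. exists l. intros eps He.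
    destruct (Hl eps He) as [N HN]. exists (c + N)%nat. intros k Hk.
    destruct (Psi_sub c (k - c)) as [tau [Ht Hkk]].
    replace (c + (k - c))%nat with k in Hkk by lia. rewrite Hkk. apply HN.
    pose proof (sincr_ge tau Ht k). lia.
Qed.
End Diag.
Section Paths.
Variable V : Type.
Variable E : V -> V -> Prop.
Implicit Types (l t : list V) (x y a b c : V).

Lemma dpath_prefix l1 l2 : dpath E (l1 ++ l2) -> dpath E l1.
Proof.
  induction l1 as [|a t IH]; simpl. auto.
  destruct t as [|b t']. auto. simpl. intros [H1 H2]. split; auto. apply IH. auto.
Qed.

Lemma dpath_tail a l : dpath E (a :: l) -> dpath E l.
Proof. destruct l; simpl; tauto. Qed.

Lemma dpath_join l1 b l2 : dpath E (l1 ++ b :: nil) -> dpath E (b :: l2) -> dpath E (l1 ++ b :: l2).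
Proof.
  induction l1 as [|a t IH]; simpl. auto.
  destruct t as [|c t'].
  - simpl. intros [H1 _] H2. split; auto.
  - simpl. intros [H1 H2] H3. split; auto. apply IH; auto.
Qed.

Lemma dpath_nodup l : acyclic E -> dpath E l -> NoDup l.
Proof.
  intros Hac. induction l as [|a t IH]; intros Hd. constructor.
  constructor.
  - intros Hin. apply in_split in Hin. destruct Hin as [l1 [l2 ->]].
    apply (Hac a l1). apply (dpath_prefix _ l2). simpl in Hd |- *.
    rewrite <- app_assoc. simpl. exact Hd.
  - apply IH. eapply dpath_tail; eauto.
Qed.

Lemma reach_trans a b c : reach E a b -> reach E b c -> reach E a c.
Proof.
  intros [l1 H1] [l2 H2]. exists (l1 ++ b :: l2).
  change (dpath E ((a :: l1 ++ b :: l2) ++ c :: nil)).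
  replace ((a :: l1 ++ b :: l2) ++ c :: nil) with ((a :: l1) ++ b :: (l2 ++ c :: nil)).
  apply dpath_join; auto. simpl. rewrite <- app_assoc. reflexivity.
Qed.

Lemma reach_irr a : acyclic E -> ~ reach E a a.
Proof. intros Hac [l Hl]. apply (Hac a l). auto. Qed.
End Paths.

Lemma enum_id : enumeration (fun n : nat => n).
Proof. split; auto. intros v; exists v; auto. Qed.

Lemma reindex (f : nat -> R) (s : nat -> nat) l :
  (forall n, 0 <= f n) -> (forall a b, s a = s b -> a = b) ->
  (forall n, (forall j, s j <> n) -> f n = 0) ->
  is_series (fun j => f (s j)) l -> is_series f l.
Proof.
  intros Hf Hinj Hout Hs.
  destruct (fubini (fun j n => f n * ind (s j = n)) (fun j => f (s j))) as [_ HF].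
  - intros j n. pose proof (ind_bounds (s j = n)). specialize (Hf n). nra.
  - intros j. assert (Hv : f (s j) = f (s j) * ind (s j = s j)) by (rewrite ind_1; auto; ring).
    rewrite Hv.
    apply (is_series_single (fun n => f n * ind (s j = n)) (s j)).
    intros k Hk. rewrite ind_0 by congruence. ring.
  - exists l. auto.
  - rewrite (is_series_unique _ _ Hs) in HF. eapply is_series_ext. 2: exact HF.
    intros n. simpl.
    assert (Hu := series_unique_pt nat (fun n => n) enum_id (fun j => s j = n)).
    assert (Hu' : is_series (fun j => f n * ind (s j = n)) (f n * ind (exists j, s j = n))).
    { apply is_series_scal'. apply Hu. intros; apply Hinj; congruence. }
    rewrite (is_series_unique _ _ Hu').
    destruct (classic (exists j, s j = n)) as [Hx|Hx].
    + rewrite ind_1 by auto. ring.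
    + rewrite ind_0 by auto. rewrite Hout. ring. intros j Hj. apply Hx. eauto.
Qed.

Lemma conv_sub u l phi : sincr phi -> conv u l -> conv (fun k => u (phi k)) l.
Proof.
  intros Hp H eps He. destruct (H eps He) as [N HN]. exists N. intros k Hk. apply HN.
  pose proof (sincr_ge phi Hp k). lia.
Qed.

Lemma abs_le_inv x c : Rabs x <= c -> - c <= x <= c.
Proof. intros H. pose proof (Rle_abs x). pose proof (Rle_abs (- x)). rewrite Rabs_Ropp in *. lra. Qed.

Lemma Rmax0_lip a b : Rabs (Rmax a 0 - Rmax b 0) <= Rabs (a - b).
Proof. unfold Rmax. destruct (Rle_dec a 0), (Rle_dec b 0); apply Rabs_le;
  pose proof (Rle_abs (a - b)); pose proof (Rle_abs (-(a - b))); rewrite Rabs_Ropp in *; lra. Qed.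

Lemma term_le_Series (f : nat -> R) j : ex_series (fun i => Rabs (f i)) -> Rabs (f j) <= Series (fun i => Rabs (f i)).
Proof.
  intros H. eapply Rle_trans. 2: apply (fsum_le_Series _ (S j)); auto.
  apply (fsum_term_le (fun i => Rabs (f i))). intros; apply Rabs_pos. lia. intros; apply Rabs_pos.
Qed.

Lemma row_limit (G : nat -> R) (pk : nat -> nat -> nat -> R) (Mk : nat -> nat) phi (p : nat -> nat -> R) :
  ex_series (fun i => Rabs (G i)) ->
  (forall k i j, 0 <= pk k i j) ->
  (forall k i j, (Mk k <= i \/ Mk k <= j)%nat -> pk k i j = 0) ->
  (forall k u, row (pk k) (Mk k) u = 0 \/ col (pk k) (Mk k) u = 0) ->
  (forall k, ex_series (fun i => Rabs (G i - (row (pk k) (Mk k) i - col (pk k) (Mk k) i))) /\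
             Series (fun i => Rabs (G i - (row (pk k) (Mk k) i - col (pk k) (Mk k) i))) < / (INR k + 1)) ->
  sincr phi -> (forall i j, conv (fun k => pk (phi k) i j) (p i j)) ->
  forall i, is_series (p i) (Rmax (G i) 0).
Proof.
  intros HG Hpos Hsup Hmin Hclose Hphi Hconv i.
  set (Gm := fun j => Rmax (- G j) 0).
  assert (HGm0 : forall j, 0 <= Gm j) by (intro; apply Rmax_r).
  assert (HGm : ex_series Gm).
  { apply ex_series_le' with (g := fun j => Rabs (G j)); auto. intros j. split; auto.
    unfold Gm, Rmax. destruct (Rle_dec (- G j) 0). apply Rabs_pos. rewrite <- Rabs_Ropp. apply Rle_abs. }
  set (H := fun k u => row (pk k) (Mk k) u - col (pk k) (Mk k) u).
  set (dl := fun k => Series (fun u => Rabs (G u - H k u))).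
  assert (Hrow : forall k u, row (pk k) (Mk k) u = Rmax (H k u) 0).
  { intros k u. unfold H. pose proof (fsum_nonneg (pk k u) (Mk k) (Hpos k u)).
    pose proof (fsum_nonneg (fun i => pk k i u) (Mk k) (fun i => Hpos k i u)).
    unfold row, col in *. destruct (Hmin k u) as [Hz|Hz]; unfold row, col in Hz; rewrite Hz; unfold Rmax.
    destruct (Rle_dec (0 - fsum (fun i0 : nat => pk k i0 u) (Mk k)) 0); lra.
    destruct (Rle_dec (fsum (pk k u) (Mk k) - 0) 0); lra. }
  assert (Hcol : forall k u, col (pk k) (Mk k) u = Rmax (- H k u) 0).
  { intros k u. unfold H. pose proof (fsum_nonneg (pk k u) (Mk k) (Hpos k u)).
    pose proof (fsum_nonneg (fun i => pk k i u) (Mk k) (fun i => Hpos k i u)).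
    unfold row, col in *. destruct (Hmin k u) as [Hz|Hz]; unfold row, col in Hz; rewrite Hz; unfold Rmax.
    destruct (Rle_dec (- (0 - fsum (fun i0 : nat => pk k i0 u) (Mk k))) 0); lra.
    destruct (Rle_dec (- (fsum (pk k u) (Mk k) - 0)) 0); lra. }
  assert (Hcolb : forall k j, col (pk k) (Mk k) j <= Gm j + Rabs (G j - H k j)).
  { intros k j. rewrite Hcol. unfold Gm. pose proof (Rmax0_lip (- H k j) (- G j)).
    replace (- H k j - - G j) with (G j - H k j) in H0 by ring.
    apply abs_le_inv in H0. lra. }
  assert (Hpk_col : forall k j, pk k i j <= col (pk k) (Mk k) j).
  { intros k j. destruct (Nat.lt_ge_cases i (Mk k)) as [Hi|Hi].
    - unfold col. apply (fsum_term_le (fun i0 => pk k i0 j)); auto.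
    - rewrite Hsup by auto. unfold col. apply fsum_nonneg. auto. }
  assert (Hb : forall N k, 0 <= row (pk k) (Mk k) i - fsum (pk k i) N <= (Series Gm - fsum Gm N) + dl k).
  { intros N k. set (L := Nat.max (Mk k) N).
    assert (HL : row (pk k) (Mk k) i = fsum (pk k i) L).
    { unfold row. symmetry. apply fsum_support. intros; apply Hsup; lia. lia. }
    rewrite HL. split.
    - assert (fsum (pk k i) N <= fsum (pk k i) L) by (apply fsum_mono; auto; lia). lra.
    - eapply Rle_trans. apply (fsum_diff_le (pk k i) (fun j => Gm j + Rabs (G j - H k j))). 
      intros j. eapply Rle_trans. apply Hpk_col. apply Hcolb. lia.
      rewrite !fsum_plus.
      pose proof (fsum_le_Series Gm L HGm0 HGm).
      destruct (Hclose k) as [Hex _].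
      pose proof (fsum_le_Series (fun j => Rabs (G j - H k j)) L (fun _ => Rabs_pos _) Hex).
      pose proof (fsum_nonneg (fun j => Rabs (G j - H k j)) N (fun _ => Rabs_pos _)).
      unfold dl. lra. }
  assert (Hdl : conv (fun k => dl (phi k)) 0).
  { apply conv_sub; auto. apply conv_squeeze with (b := fun k => / (INR k + 1)).
    - intros eps He. destruct (small_inv eps He) as [N HN]. exists N. intros k Hk.
      rewrite Rminus_0_r. rewrite Rabs_pos_eq. apply HN; auto. left. apply Rinv_0_lt_compat.
      pose proof (pos_INR k). lra.
    - intros k. rewrite Rminus_0_r. unfold dl. rewrite Rabs_pos_eq. left. apply Hclose.
      apply Series_nonneg'. intros; apply Rabs_pos. apply Hclose. }
  assert (Hrc : conv (fun k => row (pk (phi k)) (Mk (phi k)) i) (Rmax (G i) 0)).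
  { apply conv_squeeze with (b := fun k => dl (phi k)).
    - apply Hdl.
    - intros k. rewrite Hrow. eapply Rle_trans. apply Rmax0_lip. unfold dl.
      rewrite <- Rabs_Ropp. replace (- (H (phi k) i - G i)) with (G i - H (phi k) i) by ring.
      apply (term_le_Series (fun u => G u - H (phi k) u)). apply Hclose. }
  assert (Hfs : forall N, conv (fun k => fsum (pk (phi k) i) N) (fsum (p i) N)).
  { intros N. apply conv_fsum. intros j _. apply Hconv. }
  assert (Hbound : forall N, 0 <= Rmax (G i) 0 - fsum (p i) N <= Series Gm - fsum Gm N).
  { intros N. split.
    - apply (conv_le (fun _ => 0) (fun k => row (pk (phi k)) (Mk (phi k)) i - fsum (pk (phi k) i) N)).
      apply conv_const. apply conv_plus; auto. apply conv_opp; auto.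
      exists O. intros k _. apply Hb.
    - apply (conv_le (fun k => row (pk (phi k)) (Mk (phi k)) i - fsum (pk (phi k) i) N)
                     (fun k => (Series Gm - fsum Gm N) + dl (phi k))).
      apply conv_plus; auto. apply conv_opp; auto.
      assert (Hc : conv (fun k => (Series Gm - fsum Gm N) + dl (phi k)) ((Series Gm - fsum Gm N) + 0))
        by (apply conv_plus; [apply conv_const | auto]).
      rewrite Rplus_0_r in Hc. exact Hc.
      exists O. intros k _. apply Hb. }
  apply conv_series. apply conv_squeeze with (b := fun N => Series Gm - fsum Gm N).
  - apply conv_ext with (u := fun N => - (fsum Gm N - Series Gm)). intros; ring.
    replace 0 with (- 0) by ring.
    apply conv_opp. apply conv_ext with (u := fun N => fsum Gm N + - Series Gm). intros; ring.
    replace 0 with (Series Gm + - Series Gm) by ring. apply conv_plus. apply series_conv; auto. apply conv_const.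
  - intros N. specialize (Hbound N). rewrite Rabs_minus_sym. rewrite Rabs_pos_eq; lra.
Qed.
Lemma Rmax_split x : Rmax x 0 - Rmax (- x) 0 = x.
Proof. unfold Rmax. destruct (Rle_dec x 0), (Rle_dec (- x) 0); lra. Qed.

Section Construct.
Variable V : Type.
Variable E : V -> V -> Prop.
Variable e : nat -> V.
Hypothesis He : enumeration e.
Hypothesis HE : acyclic E.

Definition path (i j : nat) : list V :=
  match excluded_middle_informative (Rel E e i j) with
  | left H => e i :: proj1_sig (constructive_indefinite_description _ H) ++ e j :: nil
  | right _ => e i :: nil
  end.

Lemma path_spec i j x : dpath E (path i j) /\ path i j <> nil /\ hd x (path i j) = e i /\
  (Rel E e i j -> last (path i j) x = e j).
Proof.
  unfold path. destruct (excluded_middle_informative (Rel E e i j)) as [H|H].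
  - destruct (constructive_indefinite_description _ H) as [l Hl]. cbn [proj1_sig].
    split; auto. split. congruence. split; auto. intros _.
    change (e i :: l ++ e j :: nil) with ((e i :: l) ++ e j :: nil). apply last_last.
  - simpl. split; auto. split. congruence. split; auto. tauto.
Qed.

Lemma construct_D (g : V -> R) (p : nat -> nat -> R) :
  L1 e g -> (forall i j, 0 <= p i j) -> (forall i j, p i j <> 0 -> Rel E e i j) ->
  (forall i, is_series (p i) (Rmax (g (e i)) 0)) ->
  (forall j, is_series (fun i => p i j) (Rmax (- g (e j)) 0)) ->
  Dset e E g.
Proof.
  intros Hg Hp0 HpR Hrow Hcol.
  assert (He' := He). destruct He' as [Hinj Hsur].
  set (gam := fun n => path (fst (Cantor.of_nat n)) (snd (Cantor.of_nat n))).
  set (q := fun n => p (fst (Cantor.of_nat n)) (snd (Cantor.of_nat n))).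
  assert (Hq0 : forall n, 0 <= q n) by (intro; apply Hp0).
  set (Gp := fun i => Rmax (g (e i)) 0).
  assert (HGp : ex_series Gp).
  { apply ex_series_le' with (g := fun j => Rabs (g (e j))); auto. intros j. split. apply Rmax_r.
    unfold Gp, Rmax. destruct (Rle_dec (g (e j)) 0). apply Rabs_pos. apply Rle_abs. }
  assert (Hf1 : forall i0, is_series (fun n => q n * ind (fst (Cantor.of_nat n) = i0)) (Gp i0)).
  { intros i0. apply (reindex _ (fun j => Cantor.to_nat (i0, j))).
    - intros n. pose proof (ind_bounds (fst (Cantor.of_nat n) = i0)). specialize (Hq0 n). nra.
    - intros a b Hab. apply Cantor.to_nat_inj in Hab. congruence.
    - intros n Hn. rewrite ind_0. ring. intros Hc. apply (Hn (snd (Cantor.of_nat n))).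
      rewrite <- Hc. rewrite <- surjective_pairing. apply Cantor.cancel_to_of.
    - eapply is_series_ext. 2: apply (Hrow i0). intros j. unfold q. rewrite Cantor.cancel_of_to. simpl.
      rewrite ind_1 by auto. ring. }
  assert (Hf2 : forall j0, is_series (fun n => q n * ind (snd (Cantor.of_nat n) = j0)) (Rmax (- g (e j0)) 0)).
  { intros j0. apply (reindex _ (fun i => Cantor.to_nat (i, j0))).
    - intros n. pose proof (ind_bounds (snd (Cantor.of_nat n) = j0)). specialize (Hq0 n). nra.
    - intros a b Hab. apply Cantor.to_nat_inj in Hab. congruence.
    - intros n Hn. rewrite ind_0. ring. intros Hc. apply (Hn (fst (Cantor.of_nat n))).
      rewrite <- Hc. rewrite <- surjective_pairing. apply Cantor.cancel_to_of.
    - eapply is_series_ext. 2: apply (Hcol j0). intros i. unfold q. rewrite Cantor.cancel_of_to. simpl.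
      rewrite ind_1 by auto. ring. }
  assert (Hqs : is_series q (Series Gp)).
  { destruct (fubini (fun i n => q n * ind (fst (Cantor.of_nat n) = i)) Gp) as [_ HF]; auto.
    - intros i n. pose proof (ind_bounds (fst (Cantor.of_nat n) = i)). specialize (Hq0 n). nra.
    - eapply is_series_ext. 2: exact HF. intros n. simpl.
      assert (Hs : is_series (fun i => q n * ind (fst (Cantor.of_nat n) = i)) (q n * ind (exists i, fst (Cantor.of_nat n) = i))).
      { apply is_series_scal'. apply (series_unique_pt nat (fun k => k) enum_id (fun i => fst (Cantor.of_nat n) = i)).
        intros; congruence. }
      rewrite (is_series_unique _ _ Hs). rewrite ind_1 by eauto. ring. }
  assert (Hqex : ex_series q) by (eexists; eauto).
  assert (Hsa : forall n, sa_path E (gam n)).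
  { intros n. destruct (path_spec (fst (Cantor.of_nat n)) (snd (Cantor.of_nat n)) (e 0)) as [H1 [H2 _]].
    split; auto. split; auto. apply (dpath_nodup V E); auto. }
  assert (HQb : forall x y n, 0 <= q n * Qpath (gam n) x y <= q n).
  { intros x y n. unfold Qpath. pose proof (ind_bounds (edge_in (gam n) x y)). specialize (Hq0 n). split; nra. }
  set (Q := fun x y => Series (fun n => q n * Qpath (gam n) x y)).
  assert (HQ : forall x y, is_series (fun n => q n * Qpath (gam n) x y) (Q x y)).
  { intros x y. apply Series_correct. apply ex_series_le' with (g := q); auto. }
  exists Q. split; [|split].
  - intros x y _. unfold Q. apply Series_nonneg'. intros; apply HQb. apply ex_series_le' with (g := q); auto.
  - exists gam, q. split; auto.
  - intros x. destruct (Hsur x) as [i0 <-].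
    pose proof (div_formula V E e He gam q Q Hsa Hq0 Hqex (fun x y _ => HQ x y) (e i0)) as Hdf.
    assert (Hdf' : is_series (fun n => q n * ind (fst (Cantor.of_nat n) = i0) - q n * ind (snd (Cantor.of_nat n) = i0))
                     (div e E Q (e i0))).
    { eapply is_series_ext. 2: exact Hdf. intros n. simpl.
      destruct (Req_dec (q n) 0) as [Hz|Hz]. rewrite Hz. ring.
      assert (HR : Rel E e (fst (Cantor.of_nat n)) (snd (Cantor.of_nat n))) by (apply HpR; auto).
      destruct (path_spec (fst (Cantor.of_nat n)) (snd (Cantor.of_nat n)) (e i0)) as [_ [_ [Hh Hl]]].
      unfold gam. rewrite Hh, (Hl HR).
      rewrite (ind_iff (e (fst (Cantor.of_nat n)) = e i0) (fst (Cantor.of_nat n) = i0))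
        by (split; [apply Hinj | intros Hc; rewrite Hc; auto]).
      rewrite (ind_iff (e (snd (Cantor.of_nat n)) = e i0) (snd (Cantor.of_nat n) = i0))
        by (split; [apply Hinj | intros Hc; rewrite Hc; auto]).
      ring. }
    rewrite <- (is_series_unique _ _ Hdf'). rewrite Series_minus.
    rewrite (is_series_unique _ _ (Hf1 i0)), (is_series_unique _ _ (Hf2 i0)). unfold Gp.
    rewrite Rmax_split. auto.
    eexists; apply Hf1. eexists; apply Hf2.
Qed.
End Construct.
Theorem lemma5p1 (V : Type) (e : nat -> V) (E : V -> V -> Prop)
  (He : enumeration e) (HE : acyclic E) (g : V -> R) (Hg : L1 e g)
  (Hcl : forall eps : R, 0 < eps ->
     exists d : V -> R, Dset e E d /\ L1 e (fun x => g x - d x) /\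
                        L1norm e (fun x => g x - d x) < eps) :
  Dset e E g.
Proof.
  set (G := fun i => g (e i)).
  assert (HG : ex_series (fun i => Rabs (G i))) by exact Hg.
  assert (Rirr : forall i, ~ Rel E e i i) by (intros i; apply reach_irr; auto).
  assert (Rtr : forall i j k, Rel E e i j -> Rel E e j k -> Rel E e i k) by (intros i j k; apply reach_trans).
  assert (Hstep : forall k : nat, exists pM : (nat -> nat -> R) * nat,
     fc E e (fst pM) (snd pM) /\ (forall u, row (fst pM) (snd pM) u = 0 \/ col (fst pM) (snd pM) u = 0) /\
     ex_series (fun i => Rabs (G i - (row (fst pM) (snd pM) i - col (fst pM) (snd pM) i))) /\
     Series (fun i => Rabs (G i - (row (fst pM) (snd pM) i - col (fst pM) (snd pM) i))) < / (INR k + 1)).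
  { intros k. set (eps := / (INR k + 1)).
    assert (Heps : 0 < eps) by (apply Rinv_0_lt_compat; pose proof (pos_INR k); lra).
    destruct (Hcl (eps / 2) ltac:(lra)) as [d [Hd [HL1 HL1n]]].
    destruct (approx_D V E e He d Hd (eps / 2) ltac:(lra)) as [p0 [M [Hfc [Hex0 Hlt0]]]].
    destruct (minimal_coupling (Rel E e) Rirr Rtr p0 M Hfc) as [p [Hfc' [Hdiff Hmin]]].
    exists (p, M). simpl. split; auto. split; auto.
    assert (Hbd : forall i, 0 <= Rabs (G i - (row p M i - col p M i)) <=
                    Rabs (g (e i) - d (e i)) + Rabs (d (e i) - (row p0 M i - col p0 M i))).
    { intros i. split. apply Rabs_pos. rewrite Hdiff. unfold G.
      replace (g (e i) - (row p0 M i - col p0 M i)) with ((g (e i) - d (e i)) + (d (e i) - (row p0 M i - col p0 M i))) by ring.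
      apply Rabs_triang. }
    assert (Hexs : ex_series (fun i => Rabs (g (e i) - d (e i)) + Rabs (d (e i) - (row p0 M i - col p0 M i)))).
    { apply (ex_series_plus (fun i => Rabs (g (e i) - d (e i)))); auto. }
    split. apply ex_series_le' with (g := fun i => Rabs (g (e i) - d (e i)) + Rabs (d (e i) - (row p0 M i - col p0 M i))); auto.
    eapply Rle_lt_trans. apply (Series_le _ _ Hbd Hexs).
    rewrite Series_plus; auto. unfold L1norm in HL1n. lra. }
  set (pick := fun k => proj1_sig (constructive_indefinite_description _ (Hstep k))).
  pose proof (fun k => proj2_sig (constructive_indefinite_description _ (Hstep k))) as Hpick.
  set (pk := fun k => fst (pick k)). set (Mk := fun k => snd (pick k)).
  assert (Hfc : forall k, fc E e (pk k) (Mk k)) by (intro k; apply (Hpick k)).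
  assert (Hmin : forall k u, row (pk k) (Mk k) u = 0 \/ col (pk k) (Mk k) u = 0) by (intro k; apply (Hpick k)).
  assert (Hclose : forall k, ex_series (fun i => Rabs (G i - (row (pk k) (Mk k) i - col (pk k) (Mk k) i))) /\
             Series (fun i => Rabs (G i - (row (pk k) (Mk k) i - col (pk k) (Mk k) i))) < / (INR k + 1))
    by (intro k; apply (Hpick k)).
  assert (Hpos : forall k i j, 0 <= pk k i j) by (intros k; apply (Hfc k)).
  assert (HRl : forall k i j, pk k i j <> 0 -> Rel E e i j) by (intros k; apply (Hfc k)).
  assert (Hsup : forall k i j, (Mk k <= i \/ Mk k <= j)%nat -> pk k i j = 0) by (intros k; apply (Hfc k)).
  assert (Hbnd : forall k i j, Rabs (pk k i j) <= Rabs (G j) + 1).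
  { intros k i j. rewrite Rabs_pos_eq by auto.
    assert (H1 : pk k i j <= col (pk k) (Mk k) j).
    { destruct (Nat.lt_ge_cases i (Mk k)) as [Hi|Hi].
      - unfold col. apply (fsum_term_le (fun i0 => pk k i0 j)); auto.
      - rewrite Hsup by auto. unfold col. apply fsum_nonneg. auto. }
    assert (H2 : col (pk k) (Mk k) j <= Rabs (row (pk k) (Mk k) j - col (pk k) (Mk k) j)).
    { destruct (Hmin k j) as [Hz|Hz]; rewrite Hz.
      - rewrite Rminus_0_l, Rabs_Ropp. apply Rle_abs.
      - apply Rabs_pos. }
    assert (H3 : Rabs (G j - (row (pk k) (Mk k) j - col (pk k) (Mk k) j)) < 1).
    { eapply Rle_lt_trans. apply (term_le_Series (fun i => G i - (row (pk k) (Mk k) i - col (pk k) (Mk k) i))).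
      apply Hclose. eapply Rlt_le_trans. apply Hclose.
      rewrite <- Rinv_1. apply Rinv_le_contravar. lra. pose proof (pos_INR k). lra. }
    rewrite <- Rabs_Ropp in H3. replace (- (G j - (row (pk k) (Mk k) j - col (pk k) (Mk k) j)))
      with (row (pk k) (Mk k) j - col (pk k) (Mk k) j - G j) in H3 by ring.
    pose proof (Rabs_triang_inv (row (pk k) (Mk k) j - col (pk k) (Mk k) j) (G j)). lra. }
  destruct (diagonal (fun k c => pk k (fst (Cantor.of_nat c)) (snd (Cantor.of_nat c)))
              (fun c => Rabs (G (snd (Cantor.of_nat c))) + 1)) as [phi [Hphi Hlim]].
  { intros k c. apply Hbnd. }
  set (plim := fun c => proj1_sig (constructive_indefinite_description _ (Hlim c))).
  set (p := fun i j => plim (Cantor.to_nat (i, j))).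
  assert (Hconv : forall i j, conv (fun k => pk (phi k) i j) (p i j)).
  { intros i j. unfold p, plim. destruct (constructive_indefinite_description _ (Hlim (Cantor.to_nat (i, j)))) as [l Hl].
    simpl. rewrite Cantor.cancel_of_to in Hl. exact Hl. }
  apply (construct_D V E e He HE g p Hg).
  - intros i j. apply (conv_le (fun _ => 0) (fun k => pk (phi k) i j)). apply conv_const. apply Hconv.
    exists O. intros; apply Hpos.
  - intros i j Hne. apply NNPP. intros HnR. apply Hne.
    apply (conv_unique (fun k => pk (phi k) i j)). apply Hconv.
    apply conv_ext with (u := fun _ => 0). intros k. symmetry. destruct (Req_dec (pk (phi k) i j) 0); auto.
    exfalso. apply HnR. eapply HRl. eauto. apply conv_const.
  - intros i. apply (row_limit G pk Mk phi p); auto.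
  - intros j.
    pose proof (row_limit (fun i => - G i) (fun k i j => pk k j i) Mk phi (fun i j => p j i)) as HR.
    apply HR; clear HR.
    + eapply ex_series_ext. 2: exact HG. intros; rewrite Rabs_Ropp; auto.
    + intros; apply Hpos.
    + intros k i0 j0 H. apply Hsup. tauto.
    + intros k u. destruct (Hmin k u); [right|left]; auto.
    + intros k. destruct (Hclose k) as [Hc1 Hc2].
      assert (Hext : forall i, Rabs (G i - (row (pk k) (Mk k) i - col (pk k) (Mk k) i)) =
         Rabs (- G i - (row (fun i0 j0 => pk k j0 i0) (Mk k) i - col (fun i0 j0 => pk k j0 i0) (Mk k) i))).
      { intros i. rewrite <- Rabs_Ropp. f_equal. unfold row, col. cbv beta. change (fsum (fun i0 => pk k i i0) (Mk k)) with (fsum (pk k i) (Mk k)). ring. }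
      split. eapply ex_series_ext. 2: exact Hc1. auto.
      rewrite <- (Series_ext _ _ Hext). auto.
    + auto.
    + intros; apply Hconv.
Qed.
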